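(* Let $R$ be a commutative ring, $n\ge 1$, and suppose $\varphi=(1\perp\varepsilon)^t\,\psi_n\,(1\perp\varepsilon)$ for some $\varepsilon\in{\rm E}_{2n-1}(R)$. Then ${\rm E}_\varphi(R)={\rm E}_{2n-1}(R)$.
   Context: All rings are commutative with identity. ${\rm E}_m(R)$ is the subgroup of ${\rm SL}_m(R)$ generated by elementary matrices $I_m+\lambda e_{ij}$ ($i\neq j$, $\lambda\in R$). $\psi_n=\sum_{i=1}^n e_{2i-1,2i}-\sum_{i=1}^n e_{2i,2i-1}$ is the standard $2n\times2n$ symplectic matrix. $1\perp\varepsilon$ denotes $\begin{pmatrix}1&0\\0&\varepsilon\end{pmatrix}$. Elements of $R^m$ are row vectors, ${}^t$ is transpose. For an invertible alternating (i.e. of the form $\nu-\nu^t$) $2n\times2n$ matrix $\varphi$ write $\varphi=\begin{pmatrix}0&-c\\ c^t&\nu\end{pmatrix}$, $\varphi^{-1}=\begin{pmatrix}0&d\\ -d^t&\mu\end{pmatrix}$ with $c,d\in R^{2n-1}$, and set $\alpha_\varphi(v)=I_{2n-1}+d^tv\nu$, $\beta_\varphi(v)=I_{2n-1}+\mu v^tc$ for $v\in R^{2n-1}$. ${\rm E}_\varphi(R)$ is the subgroup of ${\rm GL}_{2n-1}(R)$ generated by all $\alpha_\varphi(v),\beta_\varphi(v)$. *)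

(* Defs.v *)
From HB Require Import structures.
From mathcomp Require Import all_boot all_order all_algebra.
Set Implicit Arguments. Unset Strict Implicit. Unset Printing Implicit Defensive.
Import GRing.Theory.
Local Open Scope ring_scope.

Inductive gen_group (R : comPzRingType) (m : nat) (gen : 'M[R]_m -> Prop)
  : 'M[R]_m -> Prop :=
| gen_group1 : gen_group gen 1%:M
| gen_groupM g A : gen g -> gen_group gen A -> gen_group gen (g *m A)
| gen_groupV g h A : gen g -> g *m h = 1%:M -> h *m g = 1%:M ->
    gen_group gen A -> gen_group gen (h *m A).

Definition elementary (R : comPzRingType) (m : nat) (A : 'M[R]_m) : Prop :=
  exists (i j : 'I_m) (l : R), i != j /\ A = 1%:M + l *: delta_mx i j.

Definition Egrp (R : comPzRingType) (m : nat) : 'M[R]_m -> Prop :=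
  gen_group (@elementary R m).

(* psi_n, as a (1 + (2n-1)) x (1 + (2n-1)) matrix; 0-based indices:
   entry (2k, 2k+1) = 1, entry (2k+1, 2k) = -1. *)
Definition psi (R : comPzRingType) (n : nat) : 'M[R]_(1 + (n.*2).-1) :=
  \matrix_(i, j) (if ~~ odd i && (j == i.+1 :> nat) then 1
                  else if odd i && (j.+1 == i :> nat) then -1 else 0).

Definition perp1 (R : comPzRingType) (m : nat) (e : 'M[R]_m) : 'M[R]_(1 + m) :=
  block_mx 1%:M 0 0 e.

Section Ephi.
Variables (R : comPzRingType) (m : nat).
(* phi = [[0, -c], [c^t, nu]], phiinv = [[0, d], [-d^t, mu]] *)
Variables (phi phiinv : 'M[R]_(1 + m)).
Definition c_of : 'rV[R]_m := - ursubmx phi.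
Definition nu_of : 'M[R]_m := drsubmx phi.
Definition d_of : 'rV[R]_m := ursubmx phiinv.
Definition mu_of : 'M[R]_m := drsubmx phiinv.
Definition alpha_phi (v : 'rV[R]_m) : 'M[R]_m := 1%:M + d_of^T *m v *m nu_of.
Definition beta_phi (v : 'rV[R]_m) : 'M[R]_m := 1%:M + mu_of *m v^T *m c_of.
Definition Ephi_gen (A : 'M[R]_m) : Prop :=
  exists v, A = alpha_phi v \/ A = beta_phi v.
Definition Ephi : 'M[R]_m -> Prop := gen_group Ephi_gen.
End Ephi.

(* Main.v *)
Require Import Defs.
From HB Require Import structures.
From mathcomp Require Import all_boot all_order all_algebra.
From mathcomp Require Import zify ring.
Import GRing.Theory.
Local Open Scope ring_scope.
Set Implicit Arguments. Unset Strict Implicit.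

Lemma gg_mul (R : comPzRingType) (m : nat) (gen : 'M[R]_m -> Prop) A B :
  gen_group gen A -> gen_group gen B -> gen_group gen (A *m B).
Proof.
elim=> [|g A' hg _ IH|g h A' hg gh hg' _ IH] hB.
- by rewrite mul1mx.
- by rewrite -mulmxA; apply: gen_groupM => //; apply: IH.
- by rewrite -mulmxA; apply: (gen_groupV hg gh hg'); apply: IH.
Qed.

Lemma gg_gen (R : comPzRingType) (m : nat) (gen : 'M[R]_m -> Prop) g :
  gen g -> gen_group gen g.
Proof. by move=> hg; rewrite -[g]mulmx1; apply: gen_groupM => //; apply: gen_group1. Qed.

Lemma gg_genV (R : comPzRingType) (m : nat) (gen : 'M[R]_m -> Prop) g h :
  gen g -> g *m h = 1%:M -> h *m g = 1%:M -> gen_group gen h.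
Proof. by move=> hg gh hg'; rewrite -[h]mulmx1; apply: (gen_groupV hg gh hg'); apply: gen_group1. Qed.

Lemma gg_sub (R : comPzRingType) (m : nat) (gen1 gen2 : 'M[R]_m -> Prop) :
  (forall g, gen1 g -> gen_group gen2 g) ->
  (forall g h, gen1 g -> g *m h = 1%:M -> h *m g = 1%:M -> gen_group gen2 h) ->
  forall A, gen_group gen1 A -> gen_group gen2 A.
Proof.
move=> H1 H2 A; elim=> [|g A' hg _ IH|g h A' hg gh hg' _ IH].
- exact: gen_group1.
- exact: gg_mul (H1 _ hg) IH.
- exact: gg_mul (H2 _ _ hg gh hg') IH.
Qed.

Lemma inv_uniq (R : comPzRingType) (m : nat) (X B h : 'M[R]_m) :
  B *m X = 1%:M -> X *m h = 1%:M -> h = B.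
Proof. by move=> BX Xh; rewrite -[h]mul1mx -BX -mulmxA Xh mulmx1. Qed.

Lemma elem_inv (R : comPzRingType) (m : nat) (g : 'M[R]_m) :
  elementary g -> exists g', elementary g' /\ g *m g' = 1%:M /\ g' *m g = 1%:M.
Proof.
case=> i [j [l [hij ->]]]; exists (1%:M + (- l) *: delta_mx i j); split.
  by exists i, j, (- l); split.
have hd : delta_mx i j *m delta_mx i j = 0 :> 'M[R]_m.
  by rewrite mul_delta_mx_0 // eq_sym.
by split; rewrite mulmxDl mulmxDr !mul1mx mulmxDr mulmx1 -!scalemxAl
  -!scalemxAr hd !scaler0 addr0 scaleNr -addrA ?addNr ?subrr ?addr0.

Qed.

Lemma Egrp_mul (R : comPzRingType) (m : nat) (A B : 'M[R]_m) :
  Egrp A -> Egrp B -> Egrp (A *m B).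
Proof. exact: gg_mul. Qed.

Lemma Egrp_inv_ex (R : comPzRingType) (m : nat) (A : 'M[R]_m) :
  Egrp A -> exists B, Egrp B /\ A *m B = 1%:M /\ B *m A = 1%:M.
Proof.
elim=> [|g A' hg _ [B [hB [h1 h2]]]|g h A' hg gh hg' _ [B [hB [h1 h2]]]].
- by exists 1%:M; split; [apply: gen_group1| rewrite mulmx1].
- have [g' [eg' [e1 e2]]] := elem_inv hg.
  exists (B *m g'); split; first by apply: Egrp_mul => //; apply: gg_gen.
  split; first by rewrite !mulmxA -[g *m A' *m B]mulmxA h1 mulmx1 e1.
  by rewrite !mulmxA -[B *m g' *m g]mulmxA e2 mulmx1 h2.
- exists (B *m g); split; first by apply: Egrp_mul => //; apply: gg_gen.
  split; first by rewrite !mulmxA -[h *m A' *m B]mulmxA h1 mulmx1 hg'.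
  by rewrite !mulmxA -[B *m g *m h]mulmxA gh mulmx1 h2.
Qed.

Lemma Egrp_inv (R : comPzRingType) (m : nat) (X h : 'M[R]_m) :
  Egrp X -> X *m h = 1%:M -> Egrp h.
Proof.
move=> hX Xh; have [B [hB [_ BX]]] := Egrp_inv_ex hX.
by rewrite (inv_uniq BX Xh).
Qed.

Lemma Egrp_tr (R : comPzRingType) (m : nat) (A : 'M[R]_m) :
  Egrp A -> Egrp A^T.
Proof.
elim=> [|g A' hg _ IH|g h A' hg gh hg' _ IH].
- by rewrite trmx1; apply: gen_group1.
- rewrite trmx_mul; apply: Egrp_mul => //; apply: gg_gen.
  case: hg => i [j [l [hij ->]]]; exists j, i, l; split; first by rewrite eq_sym.
  by rewrite linearD /= trmx1 linearZ /= trmx_delta.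
- rewrite trmx_mul; apply: Egrp_mul => //.
  apply: (Egrp_inv (X := g^T)).
    apply: gg_gen; case: hg => i [j [l [hij ->]]]; exists j, i, l; split; first by rewrite eq_sym.
    by rewrite linearD /= trmx1 linearZ /= trmx_delta.
  by rewrite -trmx_mul hg' trmx1.
Qed.


Lemma psiE (R : comPzRingType) n (i j : 'I_(1 + (n.*2).-1)) :
  psi R n i j = if odd i then (if j.+1 == i :> nat then -1 else 0)
                else (if j == i.+1 :> nat then 1 else 0).
Proof. by rewrite mxE; case: (odd i). Qed.

Lemma dimE n : (0 < n)%N -> (1 + (n.*2).-1)%N = n.*2.
Proof. by case: n. Qed.

Lemma psi_sq (R : comPzRingType) n : (0 < n)%N ->
  psi R n *m psi R n = - 1%:M.
Proof.
move=> hn; apply/matrixP => i k; rewrite !mxE.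
have hi : (i < n.*2)%N by apply: leq_trans (ltn_ord i) _; rewrite dimE.
case oi: (odd i).
- have i0 : (0 < i)%N by move: oi; case: (nat_of_ord i).
  have hp : (i.-1 < 1 + (n.*2).-1)%N by apply: leq_ltn_trans (leq_pred _) (ltn_ord i).
  pose p := Ordinal hp.
  rewrite (bigD1 p) //=.
  have -> : \sum_(j | j != p) psi R n i j * psi R n j k = 0.
    apply: big1 => j hj.
    rewrite psiE oi ifN ?mul0r //; apply/negP => /eqP e; move/negP: hj; apply.
    by apply/eqP/val_inj => /=; rewrite -e.
  rewrite addr0.
  rewrite !psiE oi /=.
  have -> : (i.-1.+1 == i :> nat) = true by apply/eqP; lia.
  have -> : odd i.-1 = false by move: oi i0; case: (nat_of_ord i) => //= t; case: (odd t).
  have -> : (k == i.-1.+1 :> nat) = (i == k) by apply/eqP/eqP => [e|/(congr1 val) /= e]; [apply: val_inj => /=; lia | lia].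
  by case: (i == k); rewrite ?mulN1r ?mulr0 ?oppr0.
- have h2 : (i.+1 < n.*2)%N.
    rewrite ltn_neqAle hi andbT; apply/negP => /eqP e.
    by move: (odd_double n); rewrite -e /= oi.
  have hp : (i.+1 < 1 + (n.*2).-1)%N by apply: leq_trans h2 _; rewrite dimE.
  pose p := Ordinal hp.
  rewrite (bigD1 p) //=.
  have -> : \sum_(j | j != p) psi R n i j * psi R n j k = 0.
    apply: big1 => j hj.
    rewrite psiE oi ifN ?mul0r //; apply/negP => /eqP e; move/negP: hj; apply.
  rewrite addr0.
  rewrite !psiE oi /= eqxx /= oi /= mul1r.
  have -> : (k.+1 == i.+1 :> nat) = (i == k) by apply/eqP/eqP => [e|/(congr1 val) /= e]; [apply: val_inj => /=; lia | lia].
  by case: (i == k); rewrite ?oppr0.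
Qed.

Lemma m_pos n : (0 < n)%N -> (0 < (n.*2).-1)%N.
Proof. by case: n => // n _; rewrite doubleS. Qed.

Lemma psi_ul (R : comPzRingType) n : ulsubmx (psi R n) = 0.
Proof. by apply/matrixP => i j; rewrite !mxE !ord1 /=. Qed.

Lemma psi_ur (R : comPzRingType) n (hn : (0 < n)%N) :
  ursubmx (psi R n) = delta_mx 0 (Ordinal (m_pos hn)).
Proof.
apply/matrixP => i j; rewrite !mxE !ord1 /=.
by case: j => [[|j] hj]; rewrite /= ?add1n.
Qed.

Lemma psi_dl (R : comPzRingType) n :
  dlsubmx (psi R n) = - (ursubmx (psi R n))^T.
Proof.
apply/matrixP => i j; rewrite !mxE !ord1 /=.
by case: i => [[|i] hi] //=; rewrite ?oppr0 //; case: (odd i).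
Qed.


Definition al0 (R : comPzRingType) m (u : 'M[R]_(1, m)) (N : 'M[R]_m) (w : 'rV[R]_m) : 'M[R]_m :=
  1%:M - u^T *m w *m N.
Definition be0 (R : comPzRingType) m (u : 'M[R]_(1, m)) (N : 'M[R]_m) (w : 'rV[R]_m) : 'M[R]_m :=
  1%:M + N *m w^T *m u.
Definition gen0 (R : comPzRingType) m (u : 'M[R]_(1, m)) (N : 'M[R]_m) (g : 'M[R]_m) : Prop :=
  exists w, g = al0 u N w \/ g = be0 u N w.

Lemma row_elem (R : comPzRingType) m (i0 : 'I_m) (r : 'rV[R]_m) :
  r 0 i0 = 0 -> Egrp (1%:M + (delta_mx i0 0 : 'M[R]_(m, 1)) *m r).
Proof.
move=> r0; rewrite [r]row_sum_delta.
elim: (index_enum _) => [|j s IH]; first by rewrite big_nil mulmx0 addr0; apply: gen_group1.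
rewrite big_cons /=.
case: (eqVneq j i0) => [->|ne]; first by rewrite r0 scale0r add0r.
have -> : 1%:M + (delta_mx i0 0 : 'M[R]_(m, 1)) *m (r 0 j *: 'e_j + \sum_(j <- s) r 0 j *: 'e_j)
   = (1%:M + r 0 j *: delta_mx i0 j) *m (1%:M + (delta_mx i0 0 : 'M[R]_(m, 1)) *m (\sum_(j <- s) r 0 j *: 'e_j)).
  rewrite mulmxDl mul1mx mulmxDr mulmx1 -scalemxAl mulmxA mul_delta_mx_0 // mul0mx scaler0 addr0.
  by rewrite mulmxDr -scalemxAr mul_delta_mx addrA addrAC.
apply: gen_groupM => //; exists i0, j, (r 0 j); split => //; by rewrite eq_sym.
Qed.


Lemma C1a (R : comPzRingType) m (i0 : 'I_m) (N : 'M[R]_m) w :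
  N *m (delta_mx 0 i0 : 'M[R]_(1, m))^T = 0 -> Egrp (al0 (delta_mx 0 i0) N w).
Proof.
move=> Q2; rewrite /al0 trmx_delta.
have -> : 1%:M - (delta_mx i0 0 : 'M[R]_(m, 1)) *m w *m N =
   1%:M + (delta_mx i0 0 : 'M[R]_(m, 1)) *m (- (w *m N)).
  by rewrite mulmxN mulmxA.
apply: row_elem.
have := congr1 (fun A : 'M[R]_1 => A 0 0) (congr1 (mulmx w) Q2).
rewrite trmx_delta mulmxA -colE mulmx0 !mxE => ->; exact: oppr0.
Qed.

Lemma C1b (R : comPzRingType) m (i0 : 'I_m) (N : 'M[R]_m) w :
  (delta_mx 0 i0 : 'M[R]_(1, m)) *m N = 0 -> Egrp (be0 (delta_mx 0 i0) N w).
Proof.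
move=> Q1; rewrite /be0.
have -> : 1%:M + N *m w^T *m (delta_mx 0 i0 : 'M[R]_(1, m)) =
   (1%:M + (delta_mx i0 0 : 'M[R]_(m, 1)) *m (N *m w^T)^T)^T.
  by rewrite linearD /= trmx1 trmx_mul trmxK trmx_delta.
apply: Egrp_tr; apply: row_elem.
have := congr1 (fun A : 'M[R]_1 => A 0 0) (congr1 (mulmx^~ w^T) Q1).
by rewrite /= -mulmxA -rowE mul0mx !mxE.
Qed.

Lemma rowg (R : comPzRingType) m (i0 : 'I_m) (N : 'M[R]_m) (r : 'rV[R]_m) :
  let u := (delta_mx 0 i0 : 'M[R]_(1, m)) in
  N *m N = - 1%:M + u^T *m u -> r *m u^T = 0 ->
  gen_group (gen0 u N) (1%:M + u^T *m r).
Proof.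
move=> u Q3 hr; apply: gg_gen; exists (r *m N); left.
rewrite /al0 -!mulmxA Q3 mulmxDr mulmxN mulmx1 mulmxA hr mul0mx addr0.
by rewrite mulmxN opprK.
Qed.

Lemma colg (R : comPzRingType) m (i0 : 'I_m) (N : 'M[R]_m) (s : 'rV[R]_m) :
  let u := (delta_mx 0 i0 : 'M[R]_(1, m)) in
  N *m N = - 1%:M + u^T *m u -> u *m s^T = 0 ->
  gen_group (gen0 u N) (1%:M + s^T *m u).
Proof.
move=> u Q3 hs; apply: gg_gen; exists (- (N *m s^T)^T); right.
rewrite /be0 linearN /= trmxK mulmxN mulNmx mulmxA Q3 mulmxDl mulNmx mul1mx.
  by rewrite -(mulmxA (u^T)) hs mulmx0 addr0 mulNmx opprK.
Qed.

Lemma comm_id (R : comPzRingType) m (i j k : 'I_m) (a : R) :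
  i != k -> k != j -> i != j ->
  (1%:M + a *: delta_mx i k) *m (1%:M + delta_mx k j) *m (1%:M + (- a) *: delta_mx i k)
    *m (1%:M + (- 1) *: delta_mx k j) = 1%:M + a *: delta_mx i j :> 'M[R]_m.
Proof.
move=> hik hkj hij.
have hki : (k == i) = false by rewrite eq_sym (negbTE hik).
have hjk : (j == k) = false by rewrite eq_sym (negbTE hkj).
have hik' := negbTE hik; have hkj' := negbTE hkj.
have hji : (j == i) = false by rewrite eq_sym (negbTE hij).
do ![rewrite mulmxDl | rewrite mulmxDr | rewrite mul1mx | rewrite mulmx1 | rewrite -scalemxAl
    | rewrite -scalemxAr | rewrite mul_delta_mx_cond | rewrite hki | rewrite hjk | rewrite hik'
    | rewrite hkj' | rewrite hji | rewrite eqxx | rewrite mulr0n | rewrite mulr1n | rewrite mul0mx | rewrite mulmx0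
    | rewrite scaler0 | rewrite addr0 | rewrite add0r].
apply/matrixP => p q; rewrite !mxE; ring.
Qed.

Lemma E0_row (R : comPzRingType) m (i0 j : 'I_m) (N : 'M[R]_m) (l : R) :
  let u := (delta_mx 0 i0 : 'M[R]_(1, m)) in
  N *m N = - 1%:M + u^T *m u -> j != i0 ->
  gen_group (gen0 u N) (1%:M + l *: delta_mx i0 j).
Proof.
move=> u Q3 hj.
have -> : l *: delta_mx i0 j = u^T *m (l *: delta_mx 0 j).
  by rewrite -scalemxAr /u trmx_delta mul_delta_mx.
apply: rowg => //.
by rewrite -scalemxAl /u trmx_delta mul_delta_mx_0 ?scaler0.
Qed.

Lemma E0_col (R : comPzRingType) m (i0 i : 'I_m) (N : 'M[R]_m) (l : R) :
  let u := (delta_mx 0 i0 : 'M[R]_(1, m)) in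
  N *m N = - 1%:M + u^T *m u -> i != i0 ->
  gen_group (gen0 u N) (1%:M + l *: delta_mx i i0).
Proof.
move=> u Q3 hi.
have -> : l *: delta_mx i i0 = (l *: delta_mx 0 i)^T *m u.
  by rewrite linearZ /= trmx_delta -scalemxAl /u mul_delta_mx.
apply: colg => //.
by rewrite linearZ /= trmx_delta -scalemxAr /u mul_delta_mx_0 ?scaler0 // eq_sym.
Qed.

Lemma elem_E0 (R : comPzRingType) m (i0 : 'I_m) (N : 'M[R]_m) g :
  let u := (delta_mx 0 i0 : 'M[R]_(1, m)) in
  N *m N = - 1%:M + u^T *m u -> elementary g -> gen_group (gen0 u N) g.
Proof.
move=> u Q3 [i [j [l [hij ->]]]].
case: (eqVneq i i0) => [ei|hi]; first by rewrite ei; apply: E0_row => //; rewrite -ei eq_sym.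
case: (eqVneq j i0) => [ej|hj]; first by rewrite ej; apply: E0_col => //.
rewrite -(comm_id l hi (negbT _) hij); last by rewrite eq_sym; apply/negbTE.
apply: gg_mul; [apply: gg_mul; [apply: gg_mul|]|].
- exact: E0_col.
- by rewrite -[delta_mx i0 j]scale1r; apply: E0_row.
- exact: E0_col.
- exact: E0_row.
Qed.


Lemma Egrp_E0 (R : comPzRingType) m (i0 : 'I_m) (N : 'M[R]_m) A :
  let u := (delta_mx 0 i0 : 'M[R]_(1, m)) in
  N *m N = - 1%:M + u^T *m u -> Egrp A -> gen_group (gen0 u N) A.
Proof.
move=> u Q3; apply: gg_sub => [g hg|g h hg gh _]; first exact: elem_E0.
have [g' [eg' [_ g'g]]] := elem_inv hg.
by rewrite (inv_uniq g'g gh); apply: elem_E0.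
Qed.

Lemma perp1_tr (R : comPzRingType) m (a : 'M[R]_m) : (perp1 a)^T = perp1 a^T.
Proof. by rewrite /perp1 tr_block_mx !trmx0 trmx1. Qed.

Lemma perp1_mul (R : comPzRingType) m (a b : 'M[R]_m) :
  perp1 a *m perp1 b = perp1 (a *m b).
Proof. by rewrite /perp1 mulmx_block !mulmx0 !mul0mx !addr0 !add0r mulmx1. Qed.

Lemma perp1_1 (R : comPzRingType) m : perp1 (1%:M : 'M[R]_m) = 1%:M.
Proof. by rewrite /perp1 -scalar_mx_block. Qed.

Lemma perp1_ur (R : comPzRingType) m (a b : 'M[R]_m) X :
  ursubmx (perp1 a *m X *m perp1 b) = ursubmx X *m b.
Proof.
rewrite -[X]submxK /perp1 !mulmx_block block_mxKur block_mxKur.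
by rewrite !mulmx0 !mul0mx !mul1mx !addr0 !add0r.
Qed.

Lemma perp1_dr (R : comPzRingType) m (a b : 'M[R]_m) X :
  drsubmx (perp1 a *m X *m perp1 b) = a *m drsubmx X *m b.
Proof.
rewrite -[X]submxK /perp1 !mulmx_block block_mxKdr block_mxKdr.
by rewrite !mulmx0 !mul0mx ?addr0 ?add0r.
Qed.

Lemma psi_Q (R : comPzRingType) n (hn : (0 < n)%N) :
  let u := ursubmx (psi R n) in let N := drsubmx (psi R n) in
  [/\ u *m N = 0, N *m u^T = 0 & N *m N = - 1%:M + u^T *m u].
Proof.
move=> u N; have H := psi_sq R hn.
rewrite -[psi R n]submxK psi_ul psi_dl mulmx_block scalar_mx_block opp_block_mx in H.
case/eq_block_mx: H => _ H1 H2 H3.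
split.
- by move: H1; rewrite mul0mx add0r oppr0.
- by move: H2; rewrite mulmx0 add0r mulmxN oppr0 => /eqP; rewrite oppr_eq0 => /eqP.
- move: H3; rewrite mulNmx => H3; rewrite -H3.
  by rewrite addrC addNKr.
Qed.


Lemma alpha_conj (R : comPzRingType) m (u : 'M[R]_(1, m)) (N eps e' : 'M[R]_m) v :
  e' *m eps = 1%:M ->
  1%:M + (- (u *m e'^T))^T *m v *m (eps^T *m N *m eps) =
  e' *m al0 u N (v *m eps^T) *m eps.
Proof.
move=> h; rewrite /al0 linearN /= trmx_mul trmxK mulmxBr mulmxBl mulmx1 h.
by rewrite !mulNmx !mulmxA.
Qed.

Lemma beta_conj (R : comPzRingType) m (u : 'M[R]_(1, m)) (N eps e' : 'M[R]_m) v :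
  e' *m eps = 1%:M ->
  1%:M + (- (e' *m N *m e'^T)) *m v^T *m (- (u *m eps)) =
  e' *m be0 u N (v *m e') *m eps.
Proof.
move=> h; rewrite /be0 mulmxDr mulmxDl mulmx1 h trmx_mul.
by rewrite mulmxN !mulNmx opprK !mulmxA.
Qed.

Lemma main_abs (R : comPzRingType) m (u : 'M[R]_(1, m)) (N eps e' : 'M[R]_m)
  (phi phiinv : 'M[R]_(1 + m)) :
  e' *m eps = 1%:M -> eps *m e' = 1%:M -> Egrp eps -> Egrp e' ->
  c_of phi = - (u *m eps) -> nu_of phi = eps^T *m N *m eps ->
  d_of phiinv = - (u *m e'^T) -> mu_of phiinv = - (e' *m N *m e'^T) ->
  (forall w, Egrp (al0 u N w)) -> (forall w, Egrp (be0 u N w)) ->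
  (forall A, Egrp A -> gen_group (gen0 u N) A) ->
  forall A, Ephi phi phiinv A <-> Egrp A.
Proof.
move=> e'e ee' hE hE' hc hnu hd hmu Ca Cb CE.
have conj : forall g, Ephi_gen phi phiinv g <-> exists2 g0, gen0 u N g0 & g = e' *m g0 *m eps.
  move=> g; split.
  - case=> v [->|->].
      exists (al0 u N (v *m eps^T)); first by exists (v *m eps^T); left.
      by rewrite /alpha_phi hd hnu alpha_conj.
    exists (be0 u N (v *m e')); first by exists (v *m e'); right.
    by rewrite /beta_phi hmu hc beta_conj.
  - case=> g0 [w [->|->]] ->.
      exists (w *m e'^T); left; rewrite /alpha_phi hd hnu alpha_conj //.
      by rewrite -(mulmxA w) -trmx_mul ee' trmx1 mulmx1.
    exists (w *m eps); right; rewrite /beta_phi hmu hc beta_conj //.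
    by rewrite -(mulmxA w) ee' mulmx1.
have g0E : forall g0, gen0 u N g0 -> Egrp g0 by move=> g0 [w [->|->]].
move=> A; split.
- apply: gg_sub => [g /conj [g0 hg0 ->]|g h /conj [g0 hg0 ->] gh _].
    by apply: Egrp_mul; [apply: Egrp_mul|] => //; apply: g0E.
  have -> : h = e' *m (eps *m h *m e') *m eps.
    by rewrite !mulmxA e'e mul1mx -mulmxA e'e mulmx1.
  apply: Egrp_mul => //; apply: Egrp_mul => //.
  apply: (Egrp_inv (g0E _ hg0)).
  move: gh; rewrite !mulmxA => gh.
  have : eps *m (e' *m g0 *m eps *m h) *m e' = eps *m 1%:M *m e' by rewrite gh.
  by rewrite mulmx1 ee' !mulmxA ee' mul1mx.
- move=> hA.
  have key : forall B0, gen_group (gen0 u N) B0 -> Ephi phi phiinv (e' *m B0 *m eps).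
    move=> B0.
    elim=> [|g0 B hg0 _ IH|g0 h0 B hg0 gh hg _ IH].
    + by rewrite mulmx1 e'e; apply: gen_group1.
    + have -> : e' *m (g0 *m B) *m eps = (e' *m g0 *m eps) *m (e' *m B *m eps).
        by rewrite !mulmxA -(mulmxA _ eps e') ee' mulmx1.
      by apply: gen_groupM => //; apply/conj; exists g0.
    + have -> : e' *m (h0 *m B) *m eps = (e' *m h0 *m eps) *m (e' *m B *m eps).
        by rewrite !mulmxA -(mulmxA _ eps e') ee' mulmx1.
      apply: (gen_groupV (g := e' *m g0 *m eps)) => //; first by apply/conj; exists g0.
        by rewrite !mulmxA -(mulmxA _ eps e') ee' mulmx1 -(mulmxA e') gh mulmx1.
      by rewrite !mulmxA -(mulmxA _ eps e') ee' mulmx1 -(mulmxA e') hg mulmx1.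
  have hB : gen_group (gen0 u N) (eps *m A *m e').
    by apply: CE; apply: Egrp_mul => //; apply: Egrp_mul.
  have eA : e' *m (eps *m A *m e') *m eps = A.
    by rewrite !mulmxA e'e mul1mx -mulmxA e'e mulmx1.
  by rewrite -eA; apply: key.
Qed.


Lemma ursubmxN (R : comPzRingType) m (X : 'M[R]_(1 + m)) : ursubmx (- X) = - ursubmx X.
Proof. by apply/matrixP => i j; rewrite !mxE. Qed.
Lemma drsubmxN (R : comPzRingType) m (X : 'M[R]_(1 + m)) : drsubmx (- X) = - drsubmx X.
Proof. by apply/matrixP => i j; rewrite !mxE. Qed.

Unset Implicit Arguments.

Theorem lemma3p11 (R : comPzRingType) (n : nat) (hn : (0 < n)%N)
  (eps : 'M[R]_((n.*2).-1)) (heps : Egrp eps)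
  (phiinv : 'M[R]_(1 + (n.*2).-1))
  (hinv1 : ((perp1 eps)^T *m psi R n *m perp1 eps) *m phiinv = 1%:M)
  (hinv2 : phiinv *m ((perp1 eps)^T *m psi R n *m perp1 eps) = 1%:M) :
  forall A : 'M[R]_((n.*2).-1),
    Ephi ((perp1 eps)^T *m psi R n *m perp1 eps) phiinv A <-> Egrp A.
Proof.
have [e' [he' [ee' e'e]]] := Egrp_inv_ex heps.
have [Q1 Q2 Q3] := psi_Q R hn.
have hQ : phiinv = perp1 e' *m (- psi R n) *m perp1 e'^T.
  apply: (inv_uniq _ hinv1).
  rewrite perp1_tr !mulmxA -(mulmxA (perp1 e' *m - psi R n)) perp1_mul -trmx_mul ee' trmx1.
  rewrite perp1_1 mulmx1 -(mulmxA (perp1 e')) mulNmx psi_sq // opprK mulmx1.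
  by rewrite perp1_mul e'e perp1_1.
apply: (main_abs (u := ursubmx (psi R n)) (N := drsubmx (psi R n)) e'e ee' heps he').
- by rewrite /c_of perp1_tr perp1_ur.
- by rewrite /nu_of perp1_tr perp1_dr.
- by rewrite /d_of hQ perp1_ur ursubmxN mulNmx.
- by rewrite /mu_of hQ perp1_dr drsubmxN mulmxN mulNmx.
- by move=> w; rewrite (psi_ur R hn); apply: C1a; rewrite -(psi_ur R hn).
- by move=> w; rewrite (psi_ur R hn); apply: C1b; rewrite -(psi_ur R hn).
- by move=> A hA; rewrite (psi_ur R hn); apply: Egrp_E0 => //; rewrite -(psi_ur R hn).
Qed.
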